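(* Let $(\mathcal F,d)$ be a metric space, $\gamma\in(0,\infty]$, and $\Sigma=(\Sigma_M)_{M\in\mathbb N}$ a sequence of non-empty subsets of $\mathcal F$ which is $\gamma$-encodable in $(\mathcal F,d)$ (if $\gamma=\infty$: $\infty$-encodable). Then for every non-empty $\mathcal C\subset\mathcal F$, $$\min(\gamma^*(\mathcal C|\Sigma),\gamma)\le\gamma^*_e(\mathcal C).$$
   Context: Approximation speed: $\gamma^*(\mathcal C|\Sigma)=\sup\{\gamma\in\mathbb R:\sup_{f\in\mathcal C}\inf_{\Phi\in\Sigma_M}d(f,\Phi)=O(M^{-\gamma})\text{ as }M\to\infty\}\in[-\infty,\infty]$ ($\sup\emptyset=-\infty$). A finite $X\subset\mathcal C$ is an $\varepsilon$-covering of $\mathcal C$ if every point of $\mathcal C$ is within distance $\varepsilon$ of some point of $X$; $N(\mathcal C,d,\varepsilon)$ is the minimal size of an $\varepsilon$-covering ($+\infty$ if none), $H(\mathcal C,d,\varepsilon)=\log_2N(\mathcal C,d,\varepsilon)$, and the encoding speed is $\gamma^*_e(\mathcal C)=\sup\{\gamma>0:H(\mathcal C,d,\varepsilon)=O(\varepsilon^{-1/\gamma})\text{ as }\varepsilon\to0\}$ ($=0$ if the set is empty). For $\gamma,h>0$, a sequence $(\Sigma(\gamma,h)_M)_M$ is a $(\gamma,h)$-encoding of $\Sigma$ if there exist $c_1,c_2>0$ such that for every $M$, $\Sigma(\gamma,h)_M$ is a $c_1M^{-\gamma}$-covering of $\Sigma_M$ (in particular a finite subset of $\Sigma_M$) with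 $\log_2|\Sigma(\gamma,h)_M|\le c_2M^{1+h}$. $\Sigma$ is $\gamma$-encodable if it admits a $(\gamma,h)$-encoding for every $h>0$; it is $\infty$-encodable if it is $\gamma$-encodable for every $\gamma>0$. *)

(* Defs.v *)
From Stdlib Require Import Reals List ClassicalEpsilon.
From Coquelicot Require Import Coquelicot.
Open Scope R_scope.

Definition is_metric {F : Type} (d : F -> F -> R) : Prop :=
  (forall x y, 0 <= d x y) /\
  (forall x y, d x y = 0 <-> x = y) /\
  (forall x y, d x y = d y x) /\
  (forall x y z, d x z <= d x y + d y z).

Definition log2 (x : R) : R := ln x / ln 2.

Definition dist_to {F : Type} (d : F -> F -> R) (f : F) (S : F -> Prop) : Rbar :=
  Rbar_glb (fun r => exists Phi, S Phi /\ r = Finite (d f Phi)).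

Definition approx_err {F : Type} (d : F -> F -> R) (C : F -> Prop)
    (Sigma : nat -> F -> Prop) (M : nat) : Rbar :=
  Rbar_lub (fun r => exists f, C f /\ r = dist_to d f (Sigma M)).

Definition approx_rate {F : Type} (d : F -> F -> R) (C : F -> Prop)
    (Sigma : nat -> F -> Prop) (g : R) : Prop :=
  exists c : R, exists M0 : nat, forall M : nat, (1 <= M)%nat -> (M0 <= M)%nat ->
    Rbar_le (Rbar_abs (approx_err d C Sigma M)) (Finite (c * Rpower (INR M) (- g))).

(* gamma^*(C | Sigma) in [-oo, oo]; Lub_Rbar of the empty set is -oo *)
Definition approx_speed {F : Type} (d : F -> F -> R) (C : F -> Prop)
    (Sigma : nat -> F -> Prop) : Rbar :=
  Lub_Rbar (fun g => approx_rate d C Sigma g).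

Definition is_covering {F : Type} (d : F -> F -> R) (A : F -> Prop)
    (eps : R) (X : list F) : Prop :=
  NoDup X /\ (forall x, In x X -> A x) /\
  (forall f, A f -> exists x, In x X /\ d f x <= eps).

(* N(A,d,eps): minimal size of an eps-covering, +oo if none *)
Definition covering_number {F : Type} (d : F -> F -> R) (A : F -> Prop)
    (eps : R) : Rbar :=
  Rbar_glb (fun r => exists X, is_covering d A eps X /\ r = Finite (INR (length X))).

Definition entropy {F : Type} (d : F -> F -> R) (A : F -> Prop) (eps : R) : Rbar :=
  match covering_number d A eps with
  | Finite n => Finite (log2 n)
  | p_infty => p_infty
  | m_infty => m_infty
  end.

Definition entropy_rate {F : Type} (d : F -> F -> R) (C : F -> Prop) (g : R) : Prop :=
  exists c : R, exists eps0 : R, 0 < eps0 /\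
    forall eps : R, 0 < eps < eps0 ->
      Rbar_le (Rbar_abs (entropy d C eps)) (Finite (c * Rpower eps (- (1 / g)))).

Definition encoding_speed {F : Type} (d : F -> F -> R) (C : F -> Prop) : Rbar :=
  let S := fun g => 0 < g /\ entropy_rate d C g in
  if excluded_middle_informative (exists g, S g) then Lub_Rbar S else Finite 0.

Definition is_encoding {F : Type} (d : F -> F -> R) (Sigma : nat -> F -> Prop)
    (g h : R) (E : nat -> list F) : Prop :=
  exists c1 c2 : R, 0 < c1 /\ 0 < c2 /\
    forall M : nat, (1 <= M)%nat ->
      is_covering d (Sigma M) (c1 * Rpower (INR M) (- g)) (E M) /\
      log2 (INR (length (E M))) <= c2 * Rpower (INR M) (1 + h).

Definition encodable {F : Type} (d : F -> F -> R) (Sigma : nat -> F -> Prop)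
    (g : R) : Prop :=
  forall h : R, 0 < h -> exists E, is_encoding d Sigma g h E.

Definition encodable_bar {F : Type} (d : F -> F -> R) (Sigma : nat -> F -> Prop)
    (g : Rbar) : Prop :=
  match g with
  | Finite r => encodable d Sigma r
  | p_infty => forall r : R, 0 < r -> encodable d Sigma r
  | m_infty => False
  end.

(* Main.v *)
Require Import Defs.
From Stdlib Require Import Reals ZArith Lra Lia List Classical ClassicalEpsilon.
From Coquelicot Require Import Coquelicot.
Open Scope R_scope.
Set Bullet Behavior "Strict Subproofs".

Lemma glb_spec (E : Rbar -> Prop) : Rbar_is_glb E (Rbar_glb E).
Proof. unfold Rbar_glb. destruct (Rbar_ex_glb E); auto. Qed.

Lemma lub_spec (E : Rbar -> Prop) : Rbar_is_lub E (Rbar_lub E).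
Proof. unfold Rbar_lub. destruct (Rbar_ex_lub E); auto. Qed.

Lemma abs_le (x : Rbar) (a : R) : Rbar_le (Rbar_abs x) (Finite a) -> Rbar_le x (Finite a).
Proof.
  destruct x as [x| |]; simpl; auto.
  intros H. pose proof (Rle_abs x). lra.
Qed.

Lemma near_point {F : Type} (d : F -> F -> R) (C : F -> Prop) (Sigma : nat -> F -> Prop)
  (M : nat) (a delta : R) f :
  0 < delta -> C f -> Rbar_le (Rbar_abs (approx_err d C Sigma M)) (Finite a) ->
  exists Phi, Sigma M Phi /\ d f Phi <= a + delta.
Proof.
  intros Hd Cf H. apply abs_le in H.
  assert (H1 : Rbar_le (dist_to d f (Sigma M)) (Finite a)).
  { eapply Rbar_le_trans; [|exact H]. unfold approx_err.
    destruct (lub_spec (fun r => exists f, C f /\ r = dist_to d f (Sigma M))) as [U _].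
    apply U. exists f; auto. }
  apply NNPP; intro Hn.
  destruct (glb_spec (fun r => exists Phi, Sigma M Phi /\ r = Finite (d f Phi))) as [_ L].
  assert (Hlb : Rbar_le (Finite (a + delta)) (dist_to d f (Sigma M))).
  { apply L. intros x [Phi [HP ->]]. simpl.
    destruct (Rle_dec (d f Phi) (a+delta)) as [h|h]; [exfalso; apply Hn; eauto|lra]. }
  pose proof (Rbar_le_trans _ _ _ Hlb H1). simpl in H0. lra.
Qed.

(* internal covering from external net *)
Lemma internalize {F : Type} (d : F -> F -> R) (C : F -> Prop) (eps : R) (L : list F) :
  is_metric d ->
  exists X, NoDup X /\ (forall x, In x X -> C x) /\ (length X <= length L)%nat /\
    forall x, In x L -> forall f, C f -> d f x <= eps -> exists y, In y X /\ d x y <= eps.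
Proof.
  intros [Hpos [Hid [Hsym Htri]]].
  induction L as [|a L IH].
  - exists nil. repeat split; simpl; auto. constructor. intros x []. intros x [].
  - destruct IH as [X [ND [SX [Len P]]]].
    destruct (classic (exists f, C f /\ d f a <= eps)) as [[y [Cy Hy]]|Hno].
    + destruct (classic (In y X)) as [Iy|Iy].
      * exists X. repeat split; auto. simpl; lia.
        intros x [<-|Ix] f Cf Hf; eauto.
        exists y; split; auto. rewrite Hsym; auto.
      * exists (y :: X). repeat split.
        -- constructor; auto.
        -- intros x [<-|Ix]; auto.
        -- simpl; lia.
        -- intros x [<-|Ix] f Cf Hf.
           ++ exists y; split; [left; auto|]. rewrite Hsym; auto.
           ++ destruct (P x Ix f Cf Hf) as [z [Hz Dz]]. exists z; split; [right|]; auto.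
    + exists X. repeat split; auto. simpl; lia.
      intros x [<-|Ix] f Cf Hf; [exfalso; eauto|eauto].
Qed.

Lemma ln2_pos : 0 < ln 2.
Proof. pose proof ln_lt_2. lra. Qed.

Lemma log2_le x y : 0 < x -> x <= y -> log2 x <= log2 y.
Proof.
  intros. unfold log2. unfold Rdiv. apply Rmult_le_compat_r.
  - left; apply Rinv_0_lt_compat, ln2_pos.
  - apply ln_le; auto.
Qed.

Lemma log2_ge0 x : 1 <= x -> 0 <= log2 x.
Proof.
  intros. unfold log2, Rdiv. apply Rmult_le_pos.
  - rewrite <- ln_1. apply ln_le; lra.
  - left; apply Rinv_0_lt_compat, ln2_pos.
Qed.

Lemma entropy_bound {F : Type} (d : F -> F -> R) (C : F -> Prop) eps X :
  (exists f, C f) -> is_covering d C eps X ->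
  Rbar_le (Rbar_abs (entropy d C eps)) (Finite (log2 (INR (length X)))).
Proof.
  intros [f Cf] HX.
  assert (Hlen : forall Y, is_covering d C eps Y -> 1 <= INR (length Y)).
  { intros Y [_ [_ HY]]. destruct (HY f Cf) as [y [Iy _]].
    destruct Y as [|z Y]; [destruct Iy|]. simpl length. rewrite S_INR.
    pose proof (pos_INR (length Y)). lra. }
  destruct (glb_spec (fun r => exists X, is_covering d C eps X /\ r = Finite (INR (length X))))
    as [LB G].
  assert (H1 : Rbar_le (covering_number d C eps) (Finite (INR (length X)))).
  { apply LB. exists X; auto. }
  assert (H2 : Rbar_le (Finite 1) (covering_number d C eps)).
  { apply G. intros r [Y [HY ->]]. simpl. apply Hlen; auto. }
  unfold entropy. destruct (covering_number d C eps) as [n| |]; simpl in *; try contradiction.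
  rewrite Rabs_right.
  - apply log2_le; lra.
  - apply Rle_ge, log2_ge0; lra.
Qed.

Lemma nat_ceil t : 0 <= t -> exists n : nat, t <= INR n <= t + 1.
Proof.
  intros Ht. destruct (archimed t) as [A B].
  assert (Hz : (0 <= up t)%Z). { apply le_IZR. simpl. lra. }
  exists (Z.to_nat (up t)). rewrite INR_IZR_INZ, Z2Nat.id by exact Hz. lra.
Qed.

Lemma Rpower_pos x y : 0 < Rpower x y.
Proof. unfold Rpower. apply exp_pos. Qed.

Lemma stepA {F : Type} (d : F -> F -> R) (C : F -> Prop) (Sigma : nat -> F -> Prop)
  r h c c1 c2 E M eps :
  is_metric d -> (exists f, C f) -> 0 < c1 ->
  Rbar_le (Rbar_abs (approx_err d C Sigma M)) (Finite (c * Rpower (INR M) (- r))) ->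
  is_covering d (Sigma M) (c1 * Rpower (INR M) (- r)) (E M) ->
  log2 (INR (length (E M))) <= c2 * Rpower (INR M) (1 + h) ->
  2 * (Rabs c + 1 + c1) * Rpower (INR M) (- r) <= eps ->
  Rbar_le (Rbar_abs (entropy d C eps)) (Finite (c2 * Rpower (INR M) (1 + h))).
Proof.
  intros Hm HC Hc1 Ha [_ [_ Hcov]] Hlog Heps.
  set (p := Rpower (INR M) (- r)).
  assert (Hp : 0 < p) by apply Rpower_pos.
  set (K := Rabs c + 1 + c1).
  assert (Ha' : Rbar_le (Rbar_abs (approx_err d C Sigma M)) (Finite (Rabs c * p))).
  { eapply Rbar_le_trans; [exact Ha|]. simpl. apply Rmult_le_compat_r; [lra|apply Rle_abs]. }
  destruct (internalize d C (K * p) (E M) Hm) as [X [ND [SX [Len P]]]].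
  destruct Hm as [Hpos [Hid [Hsym Htri]]].
  assert (HX : is_covering d C eps X).
  { split; [auto|split; [auto|]].
    intros f Cf.
    destruct (near_point d C Sigma M (Rabs c * p) p f Hp Cf Ha') as [Phi [SP DP]].
    destruct (Hcov Phi SP) as [x [Ix Dx]]. change (Rpower (INR M) (- r)) with p in Dx. change (Rpower (INR M) (- r)) with p in Heps. change (Rabs c + 1 + c1) with K in Heps.
    assert (Dfx : d f x <= K * p).
    { pose proof (Htri f Phi x). assert (K * p = Rabs c * p + p + c1 * p) by (unfold K; ring). lra. }
    destruct (P x Ix f Cf Dfx) as [y [Iy Dy]].
    exists y; split; auto. pose proof (Htri f x y). assert (2 * K * p = K * p + K * p) by ring. lra. }
  eapply Rbar_le_trans; [apply (entropy_bound d C eps X HC HX)|].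
  simpl. eapply Rle_trans; [|exact Hlog].
  destruct HC as [f Cf]. destruct HX as [_ [_ HX]]. destruct (HX f Cf) as [y [Iy _]].
  apply log2_le; [|apply le_INR; auto].
  destruct X; [destruct Iy|]. simpl length. rewrite S_INR. pose proof (pos_INR (length X)). lra.
Qed.

Lemma core {F : Type} (d : F -> F -> R) (C : F -> Prop) (Sigma : nat -> F -> Prop) r h :
  is_metric d -> (exists f, C f) -> 0 < r -> 0 < h -> approx_rate d C Sigma r ->
  (exists E, is_encoding d Sigma r h E) -> entropy_rate d C (r / (1 + h)).
Proof.
  intros Hm HC Hr Hh [c [M0 Hc]] [E [c1 [c2 [Hc1 [Hc2 HE]]]]].
  set (K := Rabs c + 1 + c1).
  assert (HK : 0 < K) by (unfold K; pose proof (Rabs_pos c); lra).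
  set (M1 := Nat.max 1 M0).
  assert (HM1 : 1 <= INR M1) by (apply (le_INR 1); unfold M1; lia).
  exists (c2 * Rpower (2 + INR M1) (1 + h) * Rpower (2 * K) ((1 + h) / r)), (2 * K).
  split; [lra|]. intros eps [He0 He1].
  set (q := 2 * K / eps).
  assert (Hqe : q * eps = 2 * K) by (unfold q; field; lra).
  assert (Hq1 : 1 < q) by nra.
  set (t := Rpower q (1 / r)).
  assert (Ht1 : 1 <= t).
  { unfold t. apply Rle_trans with (Rpower q 0); [rewrite Rpower_O; lra|]. apply Rle_Rpower; [lra|].
    unfold Rdiv. apply Rmult_le_pos; [lra|left; apply Rinv_0_lt_compat; lra]. }
  destruct (nat_ceil t) as [n [Hn1 Hn2]]; [lra|].
  set (M := (n + M1)%nat).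
  assert (HM : INR M = INR n + INR M1) by (unfold M; apply plus_INR).
  assert (HM1' : (1 <= M)%nat) by (unfold M, M1; lia).
  assert (HM0 : (M0 <= M)%nat) by (unfold M, M1; lia).
  destruct (HE M HM1') as [Hcov Hlog].
  eapply Rbar_le_trans.
  { eapply (stepA d C Sigma r h c c1 c2 E M eps Hm HC Hc1 (Hc M HM1' HM0) Hcov Hlog).
    fold K.
    assert (Hq : Rpower t r = q).
    { unfold t. rewrite Rpower_mult. replace (1 / r * r) with 1 by (field; lra).
      apply Rpower_1; lra. }
    assert (HMr : q <= Rpower (INR M) r).
    { rewrite <- Hq. apply Rle_Rpower_l; lra. }
    rewrite Rpower_Ropp.
    assert (Hinv : / Rpower (INR M) r <= / q) by (apply Rinv_le_contravar; lra).
    assert (Heq : 2 * K * / q = eps).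
    { rewrite <- Hqe. field. lra. }
    rewrite <- Heq. apply Rmult_le_compat_l; lra. }
  simpl.
  assert (HMt : INR M <= (2 + INR M1) * t) by nra.
  assert (HA : Rpower (INR M) (1 + h) <= Rpower (2 + INR M1) (1 + h) * Rpower t (1 + h)).
  { rewrite Rpower_mult_distr by lra. apply Rle_Rpower_l; [lra|]. split; [|exact HMt]. lra. }
  assert (HB : Rpower t (1 + h) =
               Rpower (2 * K) ((1 + h) / r) * Rpower eps (- (1 / (r / (1 + h))))).
  { unfold t. rewrite Rpower_mult. unfold Rpower. rewrite <- exp_plus. f_equal.
    unfold q, Rdiv. rewrite ln_mult, ln_Rinv; try lra.
    - field. lra.
    - apply Rinv_0_lt_compat; lra. }
  rewrite HB in HA.
  replace (c2 * Rpower (2 + INR M1) (1 + h) * Rpower (2 * K) ((1 + h) / r) *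
     Rpower eps (- (1 / (r / (1 + h))))) with
    (c2 * (Rpower (2 + INR M1) (1 + h) * (Rpower (2 * K) ((1 + h) / r) *
     Rpower eps (- (1 / (r / (1 + h))))))) by ring.
  apply Rmult_le_compat_l; lra.
Qed.

Lemma Rpower_anti (M : nat) a b : (1 <= M)%nat -> a <= b -> Rpower (INR M) (- b) <= Rpower (INR M) (- a).
Proof.
  intros HM Hab. apply Rle_Rpower; [apply (le_INR 1); auto|lra].
Qed.

Lemma rate_mono {F : Type} (d : F -> F -> R) (C : F -> Prop) (Sigma : nat -> F -> Prop) g r :
  approx_rate d C Sigma g -> r <= g -> approx_rate d C Sigma r.
Proof.
  intros [c [M0 H]] Hr. exists (Rabs c), M0. intros M H1 H2.
  eapply Rbar_le_trans; [apply H; auto|]. simpl.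
  pose proof (Rpower_pos (INR M) (- g)).
  apply Rle_trans with (Rabs c * Rpower (INR M) (- g)).
  - apply Rmult_le_compat_r; [lra|apply Rle_abs].
  - apply Rmult_le_compat_l; [apply Rabs_pos|apply Rpower_anti; auto].
Qed.

Lemma enc_mono {F : Type} (d : F -> F -> R) (Sigma : nat -> F -> Prop) g r :
  encodable d Sigma g -> r <= g -> encodable d Sigma r.
Proof.
  intros H Hr h Hh. destruct (H h Hh) as [E [c1 [c2 [Hc1 [Hc2 HE]]]]].
  exists E, c1, c2. split; [auto|split; [auto|]]. intros M HM.
  destruct (HE M HM) as [[ND [S Cv]] Hl]. split; [|auto].
  split; [auto|split; [auto|]]. intros f Sf. destruct (Cv f Sf) as [x [Ix Dx]].
  exists x; split; auto. eapply Rle_trans; [exact Dx|].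
  apply Rmult_le_compat_l; [lra|apply Rpower_anti; auto].
Qed.

Lemma min_lt (x : R) a b : Rbar_lt x (Rbar_min a b) -> Rbar_lt x a /\ Rbar_lt x b.
Proof.
  destruct a as [a| |]; destruct b as [b| |]; simpl; try tauto.
  unfold Rmin. destruct (Rle_dec a b); intros; split; lra.
Qed.

Theorem mainTheorem8 (F : Type) (d : F -> F -> R) (gamma : Rbar)
    (Sigma : nat -> F -> Prop) :
  is_metric d ->
  Rbar_lt (Finite 0) gamma ->
  (forall M : nat, (1 <= M)%nat -> exists Phi, Sigma M Phi) ->
  encodable_bar d Sigma gamma ->
  forall C : F -> Prop, (exists f, C f) ->
    Rbar_le (Rbar_min (approx_speed d C Sigma) gamma) (encoding_speed d C).
Proof.
  intros Hm Hg HS Henc C HC.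
  assert (Sp : forall x, 0 < x -> entropy_rate d C x -> Rbar_le (Finite x) (encoding_speed d C)).
  { intros x Hx Hr. unfold encoding_speed.
    destruct (excluded_middle_informative _) as [e|n].
    - apply (proj1 (Lub_Rbar_correct _)). split; auto.
    - exfalso; apply n; eauto. }
  assert (E0 : Rbar_le (Finite 0) (encoding_speed d C)).
  { unfold encoding_speed. destruct (excluded_middle_informative _) as [e|n].
    - destruct e as [g [Hg0 Hgr]]. apply Rbar_le_trans with (Finite g); [simpl; lra|].
      apply (proj1 (Lub_Rbar_correct _)). split; auto.
    - simpl; lra. }
  assert (Key : forall x, 0 < x -> Rbar_lt (Finite x) (Rbar_min (approx_speed d C Sigma) gamma) ->
                Rbar_le (Finite x) (encoding_speed d C)).
  { intros x Hx Hlt. apply min_lt in Hlt. destruct Hlt as [HA HG].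
    assert (Hg0 : exists g0, approx_rate d C Sigma g0 /\ x < g0).
    { apply NNPP; intro Hn.
      assert (Hub : is_ub_Rbar (fun g => approx_rate d C Sigma g) (Finite x)).
      { intros g Hgr. simpl. destruct (Rle_dec g x); auto. exfalso; apply Hn.
        exists g; split; auto; lra. }
      apply (Rbar_lt_not_le _ _ HA). apply (proj2 (Lub_Rbar_correct _)); auto. }
    destruct Hg0 as [g0 [Hr0 Hxg0]].
    assert (Hr : exists r, x < r /\ approx_rate d C Sigma r /\ encodable d Sigma r).
    { destruct gamma as [gv| |]; simpl in HG, Henc.
      - exists (Rmin g0 gv). split; [apply Rmin_glb_lt; auto|split].
        + apply (rate_mono _ _ _ g0); auto. apply Rmin_l.
        + apply (enc_mono _ _ gv); auto. apply Rmin_r.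
      - exists g0. split; [auto|split; auto]. apply Henc; lra.
      - contradiction. }
    destruct Hr as [r [Hxr [Har Her]]].
    assert (H1 : 1 < r / x).
    { apply (Rmult_lt_reg_r x); [lra|]. rewrite Rmult_1_l. unfold Rdiv.
      rewrite Rmult_assoc, Rinv_l, Rmult_1_r; lra. }
    pose proof (core d C Sigma r (r / x - 1) Hm HC ltac:(lra) ltac:(lra) Har (Her (r / x - 1) ltac:(lra))) as Hc.
    replace (r / (1 + (r / x - 1))) with x in Hc by (field; lra).
    apply Sp; auto. }
  revert Key E0. generalize (encoding_speed d C) as e.
  generalize (Rbar_min (approx_speed d C Sigma) gamma) as m.
  intros m e Key E0.
  destruct m as [m| |]; destruct e as [e| |]; simpl in *; try tauto.
  - destruct (Rle_dec m e) as [h|h]; auto. exfalso.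
    pose proof (Key ((e + m) / 2) ltac:(lra) ltac:(lra)). simpl in H. lra.
  - pose proof (Key (e + 1) ltac:(lra) I). simpl in H. lra.
Qed.
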